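(* Let $G=\mathbb{Z}_{3,0}^{4}\rtimes S_4$, where $S_4$ acts on $\mathbb{Z}_{3,0}^4$ by permuting coordinates. Then $\mathrm{mdim}_{\mathbb{C}}(G)=4$ and $\mathrm{mdim}_{\mathbb{R}}(G)=6$. Every faithful complex representation of $G$ of dimension $4$ is irreducible and non-real; consequently no faithful real representation of $G$ of minimal dimension $6$ is obtained as the realification of a faithful complex representation of minimal dimension $4$.
   Context: For integers $k>1$, $m>0$, $\mathbb{Z}_{k,0}^m$ is the kernel of the homomorphism $\mathbb{Z}_k^m\to\mathbb{Z}_k$ sending an $m$-tuple to the sum of its entries. For a finite group $G$ and field $F$, $\mathrm{mdim}_F(G)$ is the smallest dimension of a faithful representation of $G$ over $F$. A complex representation is called real if it is obtained by extension of scalars from a representation over $\mathbb{R}$, and non-real otherwise. The realification of a complex representation $V$, decomposed as a sum of irreducible real pieces $V_i$ and irreducible non-real pieces $W_j$, is $V\oplus\bigoplus_j\overline{W_j}$, which is realizable over $\mathbb{R}$. *)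

(* Defs.v *)
From HB Require Import structures.
From mathcomp Require Import all_boot all_order all_algebra all_fingroup.
From mathcomp Require Import all_solvable all_character.
From mathcomp Require Import complex.
From mathcomp Require Import Rstruct.
From Stdlib Require Import Reals.

Set Implicit Arguments.
Unset Strict Implicit.
Unset Printing Implicit Defensive.

Import GRing.Theory.
Local Open Scope ring_scope.

Definition S4 : {group {perm 'I_4}} := [set: {perm 'I_4}]%G.

(* S_4 acts on Z_3^4 by permuting coordinates: (v *m perm_mx s) 0 j = v 0 (s^-1 j). *)
Definition perm4_mx (s : {perm 'I_4}) : 'M['Z_3]_4 := perm_mx s.

Lemma perm4_mx_repr : mx_repr S4 perm4_mx.
Proof. by split=> [|s t _ _]; rewrite /perm4_mx ?perm_mx1 ?perm_mxM. Qed.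

Canonical perm4_repr := MxRepresentation perm4_mx_repr.

Definition perm4_act := ('MR perm4_repr)%gact.

Definition Z30_set : {set 'rV['Z_3]_4} := [set v : 'rV['Z_3]_4 | \sum_(j < 4) v 0 j == 0].

Lemma Z30_group_set : group_set Z30_set.
Proof.
apply/group_setP; split=> [|u v]; rewrite !inE.
  by apply/eqP; apply: big1 => j _; rewrite mxE.
move=> /eqP su /eqP sv; apply/eqP.
have -> : (u * v)%g = u + v by [].
by rewrite (eq_bigr (fun j => u 0 j + v 0 j)) ?big_split /= ?su ?sv ?addr0 // => j _; rewrite mxE.
Qed.

Canonical Z30 : {group 'rV['Z_3]_4} := group Z30_group_set.

Lemma perm4_acts_Z30 : {acts S4, on group Z30 | perm4_act}.
Proof.
split; last exact: subsetT.
apply/subsetP=> s _; rewrite !inE /=; apply/subsetP=> v; rewrite !inE /=.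
rewrite mx_repr_actE ?inE //= /perm4_mx -[s]invgK -col_permE.
move=> /eqP sv; apply/eqP; rewrite -[RHS]sv.
rewrite (reindex_inj (@perm_inj _ s)) /=.
by apply: eq_bigr => j _; rewrite mxE permK.
Qed.

Definition Z30_rtimes_S4 := sdprod_by (actby_groupAction perm4_acts_Z30).

Definition G5p3 : {group Z30_rtimes_S4} := [set: Z30_rtimes_S4]%G.

Definition RR : rcfType := Rdefinitions.R.
Notation CC := (complex RR).

Definition has_mdim (F : fieldType) (gT : finGroupType) (G : {group gT}) (d : nat) :=
  (exists rG : mx_representation F G d, mx_faithful rG) /\
  (forall n (rG : mx_representation F G n), mx_faithful rG -> leq d n).

Definition is_real_repr (gT : finGroupType) (G : {group gT}) n
    (rC : mx_representation CC G n) : Prop :=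
  exists rR : mx_representation RR G n,
    mx_rsim (map_repr (real_complex RR) rR) rC.

Definition conj_repr (gT : finGroupType) (G : {group gT}) n
    (rC : mx_representation CC G n) := map_repr (@conjc RR) rC.

Section DirectSum.
Variables (F : fieldType) (gT : finGroupType) (G : {group gT}) (n1 n2 : nat).
Variables (r1 : mx_representation F G n1) (r2 : mx_representation F G n2).

Definition dsum_mx (x : gT) : 'M[F]_(n1 + n2) := block_mx (r1 x) 0 0 (r2 x).

Lemma dsum_mx_repr : mx_repr G dsum_mx.
Proof.
split.
  rewrite /dsum_mx !repr_mx1. by rewrite -scalar_mx_block.
move=> x y Gx Gy; rewrite /dsum_mx.
by rewrite mulmx_block !mulmx0 !mul0mx !addr0 !add0r !repr_mxM.
Qed.

Canonical dsum_repr := MxRepresentation dsum_mx_repr.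
End DirectSum.

(* rW is a realification of rV: for some decomposition of rV into a direct   *)
(* sum of irreducible (simple) submodules U_i, with the non-real ones being  *)
(* the U_i for i outside P, rW is similar to rV ⊕ conj(⊕_{i ∉ P} U_i).        *)
Definition realification_of (gT : finGroupType) (G : {group gT})
    n (rV : mx_representation CC G n) m (rW : mx_representation CC G m) : Prop :=
  exists (I : finType) (U : I -> 'M[CC]_n) (P : pred I),
    [/\ mxdirect (\sum_i U i), (\sum_i U i == 1%:M)%MS,
        forall i, mxsimple rV (U i),
        forall i, P i <-> (exists modU : mxmodule rV (U i),
                              is_real_repr (submod_repr modU)) &
        exists modN : mxmodule rV (\sum_(i | ~~ P i) U i)%MS,
          mx_rsim rW (dsum_repr rV (conj_repr (submod_repr modN)))].

(* Main.v *)
Require Import Defs.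
From HB Require Import structures.
From mathcomp Require Import all_boot all_order all_algebra all_fingroup.
From mathcomp Require Import all_solvable all_character.
From mathcomp Require Import complex.
From mathcomp Require Import Rstruct.
From mathcomp Require Import ring lra.
Set Implicit Arguments. Unset Strict Implicit. Unset Printing Implicit Defensive.
Import GRing.Theory Num.Theory.
Local Open Scope ring_scope.
Section Omega.
Local Open Scope complex_scope.
Definition s3 : RR := Num.sqrt 3.
Lemma s3sq : s3 * s3 = 3.
Proof. by rewrite -expr2 sqr_sqrtr // ler0n. Qed.
Lemma s3ne0 : s3 != 0.
Proof. apply/eqP=> h; have := s3sq; rewrite h mul0r => /eqP; rewrite eq_sym pnatr_eq0. by []. Qed.
Definition om : CC := (- 2^-1) +i* (s3 / 2).
Lemma sq_s3 : s3 / 2 * (s3 / 2) = 3 / 4.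
Proof. by rewrite -s3sq; field. Qed.
Lemma om2 : om ^+ 2 = (- 2^-1) +i* (- (s3 / 2)).
Proof.
rewrite expr2 /om /=; apply/eqP; rewrite eq_complex /=; apply/andP; split; apply/eqP.
  have := s3sq; nra.
by field.
Qed.
Lemma om3 : om ^+ 3 = 1.
Proof.
rewrite exprS om2 /om /=; apply/eqP; rewrite eq_complex /=; apply/andP; split; apply/eqP.
  have := s3sq; nra.
by field.
Qed.
Lemma om_sum : 1 + om + om ^+ 2 = 0.
Proof.
rewrite om2 /om /=; apply/eqP; rewrite eq_complex /=; apply/andP; split; apply/eqP; by field.
Qed.
Lemma om_conj : om^* = om ^+ 2.
Proof. by rewrite om2. Qed.
Lemma om_neq1 : om != 1.
Proof. rewrite /om eq_complex /= negb_and; apply/orP; left; apply/eqP => h. have : (2:RR) * (- 2^-1) = 2 * 1 by rewrite h. rewrite mulrN mulfV ?pnatr_eq0 //; lra. Qed.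
Lemma om2_neq1 : om ^+ 2 != 1.
Proof. rewrite om2 eq_complex /= negb_and; apply/orP; left; apply/eqP => h. have : (2:RR) * (- 2^-1) = 2 * 1 by rewrite h. rewrite mulrN mulfV ?pnatr_eq0 //; lra. Qed.
Lemma om_neq0 : om != 0.
Proof. by apply/eqP => h; move: om3; rewrite h expr0n /= => /eqP; rewrite eq_sym oner_eq0. Qed.

End Omega.

Definition K := ('Z_3 * 'Z_3 * 'Z_3)%type.
Check (0 : K).
Definition pw (t : 'Z_3) : CC := om ^+ (val t).
Lemma om_mod n : om ^+ n = om ^+ (n %% 3).
Proof. by rewrite {1}(divn_eq n 3) exprD mulnC exprM om3 expr1n mul1r. Qed.
Lemma pwD t u : pw (t + u) = pw t * pw u.
Proof. by rewrite /pw -exprD [in RHS]om_mod. Qed.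
Lemma pw0 : pw 0 = 1.
Proof. by []. Qed.
Lemma pwN t : pw (- t) * pw t = 1.
Proof. by rewrite -pwD addNr. Qed.
Lemma pw_neq0 t : pw t != 0.
Proof. by rewrite /pw expf_neq0 // om_neq0. Qed.
Lemma pw_eq1 t : (pw t == 1) = (t == 0).
Proof.
case: t => [[|[|[|//]]] ?] //=; rewrite /pw /=.
- by rewrite expr0 eqxx.
- by rewrite expr1 (negbTE om_neq1).
- by rewrite (negbTE om2_neq1).
Qed.
Lemma valM (a b : 'Z_3) : val (a * b) = ((val a * val b) %% 3)%N.
Proof. by []. Qed.
Lemma valN (a : 'Z_3) : val (- a) = ((3 - val a) %% 3)%N.
Proof. by []. Qed.
Lemma pw_conj t : (pw t)^*%C = pw (- t).
Proof.
rewrite /pw valN -om_mod. have -> : (om ^+ val t)^*%C = (om^*%C) ^+ val t by rewrite rmorphXn. rewrite om_conj -exprM.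
case: t => [[|[|[|//]]] ?] /=.
- by rewrite [LHS]om_mod [RHS]om_mod.
- by rewrite [LHS]om_mod [RHS]om_mod.
- by rewrite [LHS]om_mod [RHS]om_mod.
Qed.
Lemma S3sum t : \sum_(u : 'Z_3) pw (u * t) = if t == 0 then 3 else 0.
Proof.
rewrite !big_ord_recl big_ord0 addr0 /pw !valM -!om_mod.
case: t => [[|[|[|//]]] ?] /=.
- by rewrite !expr0.
- by rewrite !muln1 expr0 expr1 addrA om_sum.
- have -> : om ^+ (bump 0 0 * 2) = om ^+ 2 by []. have -> : om ^+ (bump 0 (bump 0 0) * 2) = om by rewrite om_mod. by rewrite expr0 -om_sum; ring.
Qed.
Definition dot (c k : K) : 'Z_3 := c.1.1 * k.1.1 + c.1.2 * k.1.2 + c.2 * k.2.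
Definition chi c k := pw (dot c k).
Lemma dotDr c k l : dot c (k + l) = dot c k + dot c l.
Proof. rewrite /dot /=. ring. Qed.
Lemma dotNl c k : dot (- c) k = - dot c k.
Proof. rewrite /dot /=. ring. Qed.
Lemma dotNr c k : dot c (- k) = - dot c k.
Proof. rewrite /dot /=. ring. Qed.
Lemma chiD c k l : chi c (k + l) = chi c k * chi c l.
Proof. by rewrite /chi dotDr pwD. Qed.
Lemma chiN c k : chi c (-k) * chi c k = 1.
Proof. by rewrite /chi dotNr pwN. Qed.
Lemma chi_conj c k : (chi c k)^*%C = chi (- c) k.
Proof. by rewrite /chi pw_conj dotNl. Qed.
Lemma chi0 c : chi c 0 = 1.
Proof. by rewrite /chi /dot /= !mulr0 !addr0. Qed.
Lemma triple_sum (f g h : 'Z_3 -> CC) :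
  \sum_a \sum_b \sum_d f a * g b * h d = (\sum_a f a) * (\sum_b g b) * (\sum_d h d).
Proof.
rewrite big_distrl /= big_distrl /=; apply: eq_bigr => a _.
rewrite [f a * _]big_distrr /= big_distrl /=; apply: eq_bigr => b _.
by rewrite big_distrr.
Qed.
Lemma sum_chi k : \sum_(c : K) chi c k = if k == 0 then 27 else 0.
Proof.
rewrite (eq_bigr (fun c : K => pw (c.1.1 * k.1.1) * pw (c.1.2 * k.1.2) * pw (c.2 * k.2))); last first.
  by move=> c _; rewrite /chi /dot !pwD.
rewrite -(pair_bigA _ (fun ab d => pw (ab.1 * k.1.1) * pw (ab.2 * k.1.2) * pw (d * k.2))) /=.
rewrite -(pair_bigA _ (fun a b => \sum_d pw (a * k.1.1) * pw (b * k.1.2) * pw (d * k.2))) /=.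
rewrite triple_sum.
rewrite !S3sum; case: k => [[k1 k2] k3] /=.
rewrite !xpair_eqE.
by case: eqP; case: eqP; case: eqP => //= *; ring.
Qed.

Definition toA := actby_groupAction perm4_acts_Z30.
Definition inA (x : 'rV['Z_3]_4) : Z30_rtimes_S4 := sdpair1 toA x.
Definition inS (s : {perm 'I_4}) : Z30_rtimes_S4 := sdpair2 toA s.
Lemma toAE x a : x \in Z30 -> toA x a = x *m perm4_mx a.
Proof.
move=> Zx; rewrite /toA /= actbyE //.
change (mx_repr_act perm4_repr x a = x *m perm4_mx a); by rewrite mx_repr_actE.
Qed.
Lemma inA_conj x a : x \in Z30 -> inA (x *m perm4_mx a) = (inA x ^ inS a)%g.
Proof. by move=> Zx; rewrite -toAE // /inA /inS sdpair_act. Qed.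
Lemma inAM x y : x \in Z30 -> y \in Z30 -> inA (x + y) = (inA x * inA y)%g.
Proof. by move=> Zx Zy; rewrite /inA -morphM. Qed.
Lemma inA0 : inA 0 = 1%g.
Proof. exact: morph1. Qed.
Lemma inA_inj x : x \in Z30 -> inA x = 1%g -> x = 0.
Proof.
move=> Zx h; have /injmP inj := injm_sdpair1 toA.
apply: (inj x 1%g Zx (group1 _)); rewrite /= morph1; exact: h.
Qed.
Definition i0 : 'I_4 := @Ordinal 4 0 isT.
Definition i1 : 'I_4 := @Ordinal 4 1 isT.
Definition i2 : 'I_4 := @Ordinal 4 2 isT.
Definition i3 : 'I_4 := @Ordinal 4 3 isT.
Lemma ord4P (j : 'I_4) : [\/ j = i0, j = i1, j = i2 | j = i3].
Proof.
case: j => [[|[|[|[|//]]]] ?]; [constructor 1|constructor 2|constructor 3|constructor 4]; exact: val_inj.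
Qed.
Definition emb (k : K) : 'rV['Z_3]_4 :=
  \row_j [:: -(k.1.1 + k.1.2 + k.2); k.1.1; k.1.2; k.2]`_j.
Lemma emb_in k : emb k \in Z30.
Proof.
rewrite inE /= !big_ord_recl big_ord0 !mxE /=.
by apply/eqP; rewrite addr0; ring.
Qed.
Lemma embD k l : emb (k + l) = emb k + emb l.
Proof. by apply/rowP => j; rewrite !mxE; case: (ord4P j) => -> /=; ring. Qed.
Lemma emb0 : emb 0 = 0.
Proof. by apply/rowP => j; rewrite !mxE; case: (ord4P j) => -> /=; rewrite ?addr0 ?oppr0. Qed.
Definition k100 : K := (1, 0, 0).
Lemma emb100_neq0 : emb k100 != 0.
Proof. by apply/eqP => /rowP /(_ i1); rewrite !mxE. Qed.
Lemma mul_perm4 (x : 'rV['Z_3]_4) s j : (x *m perm4_mx s) 0 j = x 0 (s^-1 j)%g.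
Proof. by rewrite /perm4_mx -[s]invgK -col_permE mxE invgK. Qed.
Definition t01 := tperm i0 i1.
Definition t12 := tperm i1 i2.
Definition t23 := tperm i2 i3.
Definition sg01 (k : K) : K := (-(k.1.1 + k.1.2 + k.2), k.1.2, k.2).
Definition sg12 (k : K) : K := (k.1.2, k.1.1, k.2).
Definition sg23 (k : K) : K := (k.1.1, k.2, k.1.2).
Definition ta01 (c : K) : K := (- c.1.1, c.1.2 - c.1.1, c.2 - c.1.1).
Lemma emb_t01 k : emb k *m perm4_mx t01 = emb (sg01 k).
Proof.
apply/rowP => j; rewrite mul_perm4 /t01 tpermV.
case: (ord4P j) => ->; rewrite ?tpermL ?tpermR ?tpermD // !mxE /=; ring.
Qed.
Lemma emb_t12 k : emb k *m perm4_mx t12 = emb (sg12 k).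
Proof.
apply/rowP => j; rewrite mul_perm4 /t12 tpermV.
case: (ord4P j) => ->; rewrite ?tpermL ?tpermR ?tpermD // !mxE /=; ring.
Qed.
Lemma emb_t23 k : emb k *m perm4_mx t23 = emb (sg23 k).
Proof.
apply/rowP => j; rewrite mul_perm4 /t23 tpermV.
case: (ord4P j) => ->; rewrite ?tpermL ?tpermR ?tpermD // !mxE /=; ring.
Qed.
Lemma sg01K : involutive sg01. Proof. by case=> [[a b] c]; rewrite /sg01 /=; congr (_, _, _); ring. Qed.
Lemma sg12K : involutive sg12. Proof. by case=> [[a b] c]. Qed.
Lemma sg23K : involutive sg23. Proof. by case=> [[a b] c]. Qed.
Lemma dot_sg01 c k : dot c (sg01 k) = dot (ta01 c) k.
Proof. rewrite /dot /=; ring. Qed.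
Lemma dot_sg12 c k : dot c (sg12 k) = dot (sg12 c) k.
Proof. rewrite /dot /=; ring. Qed.
Lemma dot_sg23 c k : dot c (sg23 k) = dot (sg23 c) k.
Proof. rewrite /dot /=; ring. Qed.

Lemma inG (g : Z30_rtimes_S4) : g \in G5p3. Proof. by rewrite inE. Qed.
Lemma idem_tr m (P : 'M[CC]_m) : P *m P = P -> \tr P = (\rank P)%:R.
Proof.
move=> PP; have XY : col_base P *m row_base P = P by rewrite mulmx_base.
have YX : row_base P *m col_base P = 1%:M.
  apply: (row_free_inj (row_base_free P)); rewrite mul1mx.
  apply: (row_full_inj (col_base_full P)).
  by rewrite (mulmxA (col_base P)) (mulmxA (col_base P) (row_base P)) XY -mulmxA XY PP.
by rewrite -{1}XY mxtrace_mulC YX mxtrace1.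
Qed.
Section Weights.
Variables (n : nat) (rho : mx_representation CC G5p3 n).
Definition R k := rho (inA (emb k)).
Lemma R_mul k l : R k *m R l = R (k + l).
Proof. by rewrite /R -repr_mxM ?inG // embD inAM ?emb_in. Qed.
Lemma R0 : R 0 = 1%:M.
Proof. by rewrite /R emb0 inA0 repr_mx1. Qed.
Lemma R_comm k l : R k *m R l = R l *m R k.
Proof. by rewrite !R_mul addrC. Qed.
Definition e c := \sum_(k : K) chi c (- k) *: R k.
Lemma Re_l k c : R k *m e c = chi c k *: e c.
Proof.
rewrite /e mulmx_sumr scaler_sumr [RHS](reindex_inj (addrI k)) /=.
apply: eq_bigr => l _; rewrite -scalemxAr R_mul scalerA; congr (_ *: _).
by rewrite -chiD opprD addNKr.
Qed.
Lemma Re_r k c : e c *m R k = chi c k *: e c.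
Proof.
rewrite -Re_l /e mulmx_suml mulmx_sumr; apply: eq_bigr => l _.
by rewrite -scalemxAl -scalemxAr R_comm.
Qed.
Lemma cardK : #|{: K}| = 27%N.
Proof. by rewrite !card_prod !card_ord. Qed.
Lemma e_sum : \sum_c e c = 27%:R *: 1%:M.
Proof.
rewrite /e exchange_big /=.
rewrite (eq_bigr (fun k => (if - k == 0 then 27 else 0) *: R k)); last first.
  by move=> k _; rewrite -scaler_suml sum_chi.
rewrite (bigD1 (0 : K)) //= R0 big1 ?addr0 // => k nk.
by rewrite (_ : (- k == 0) = false) ?scale0r //; apply/negbTE; rewrite oppr_eq0.
Qed.
Lemma e_sq c : e c *m e c = 27%:R *: e c.
Proof.
rewrite {1}/e mulmx_suml.
rewrite (eq_bigr (fun _ => e c)); last first.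
  by move=> k _; rewrite -scalemxAl Re_l scalerA chiN scale1r.
by rewrite sumr_const cardK scaler_nat.
Qed.
Lemma R_decomp k : 27%:R *: R k = \sum_c chi c k *: e c.
Proof.
rewrite -[R k]mulmx1 scalemxAr -e_sum mulmx_sumr.
by apply: eq_bigr => c _; rewrite Re_l.
Qed.
Lemma n27 : (27%:R : CC) != 0.
Proof. by rewrite pnatr_eq0. Qed.
Lemma dim_count : n = (\sum_c \rank (e c))%N.
Proof.
set f := fun c => 27%:R^-1 *: e c.
have ff c : f c *m f c = f c.
  by rewrite /f -scalemxAl -scalemxAr e_sq !scalerA mulrC mulrA mulfV ?n27 // mul1r.
have rf c : \rank (f c) = \rank (e c).
  by rewrite /f eqmx_scale // invr_eq0 n27.
have sf : \sum_c f c = 1%:M.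
  by rewrite /f -scaler_sumr e_sum scalerA mulVf ?n27 // scale1r.
apply/eqP; rewrite -(eqr_nat CC) -mxtrace1 -sf raddf_sum /= natr_sum.
by apply/eqP; apply: eq_bigr => c _; rewrite idem_tr // rf.
Qed.

Lemma card_wt : (#|[set c | e c != 0%R]| <= n)%N.
Proof.
rewrite [X in (_ <= X)%N]dim_count (bigID (fun c => c \in [set c | e c != 0%R])) /=.
apply: leq_trans (leq_addr _ _).
rewrite -sum1_card; apply: leq_sum => c; rewrite inE lt0n mxrank_eq0.
by [].
Qed.
Lemma R_conj s sg : (forall k, emb k *m perm4_mx s = emb (sg k)) ->
  forall k, R k *m rho (inS s) = rho (inS s) *m R (sg k).
Proof.
move=> hs k; rewrite /R -!repr_mxM ?inG // -hs inA_conj ?emb_in //.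
by rewrite conjgC.
Qed.
Lemma e_conj s sg ta : (forall k, emb k *m perm4_mx s = emb (sg k)) ->
  involutive sg -> (forall c k, dot c (sg k) = dot (ta c) k) ->
  forall c, e c *m rho (inS s) = rho (inS s) *m e (ta c).
Proof.
move=> hs sgK hd c; rewrite /e mulmx_suml mulmx_sumr.
rewrite (reindex_inj (can_inj sgK)) /=; apply: eq_bigr => l _.
rewrite -scalemxAl (R_conj hs) sgK -scalemxAr; congr (_ *: _).
by rewrite /chi dotNr hd -dotNr.
Qed.
Lemma e_conj_nz s sg ta : (forall k, emb k *m perm4_mx s = emb (sg k)) ->
  involutive sg -> (forall c k, dot c (sg k) = dot (ta c) k) ->
  forall c, e c != 0 -> e (ta c) != 0.
Proof.
move=> hs sgK hd c; apply: contra => /eqP h.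
have := e_conj hs sgK hd c; rewrite h mulmx0 => h2.
have := repr_mx_unit rho (inG (inS s)) => U.
by rewrite -[e c]mulmx1 -(mulmxV U) mulmxA h2 mul0mx.
Qed.
Lemma weight_nontriv : (exists k, R k != 1%:M) -> exists c, c != 0 /\ e c != 0.
Proof.
case=> k nk.
case: (boolP [exists c : K, (c != 0) && (e c != 0%R)]) => [/existsP [c /andP [h1 h2]]|/existsPn H].
  by exists c.
have e0 c : c != 0 -> e c = 0.
  by move=> cn; move: (H c); rewrite cn /= negbK => /eqP.
have s1 : \sum_c e c = e 0.
  by rewrite (bigD1 (0:K)) //= big1 ?addr0 // => c /e0.
have s2 : \sum_c chi c k *: e c = e 0.
  rewrite (bigD1 (0:K)) //= big1 ?addr0; last by move=> c /e0 ->; rewrite scaler0.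
  by rewrite /chi /dot /= !mul0r !addr0 pw0 scale1r.
have : 27%:R *: R k = 27%:R *: 1%:M :> 'M[CC]_n by rewrite R_decomp s2 -s1 e_sum.
move/(congr1 (fun M => 27%:R^-1 *: M)); rewrite !scalerA mulVf ?n27 // !scale1r => h.
by rewrite h eqxx in nk.
Qed.
Lemma cjM (a b : CC) : (a * b)^*%C = (a^*%C) * (b^*%C).
Proof. exact: rmorphM. Qed.
Lemma cj_sum (I : finType) (F : I -> CC) : (\sum_i F i)^*%C = \sum_i (F i)^*%C.
Proof. exact: rmorph_sum. Qed.
Lemma e_conjc : (forall g, map_mx (@conjc RR) (rho g) = rho g) ->
  forall c, map_mx (@conjc RR) (e c) = e (- c).
Proof.
move=> hr c; apply/matrixP => i j; rewrite mxE !summxE cj_sum.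
apply: eq_bigr => k _; rewrite !mxE cjM chi_conj.
congr (_ * _); rewrite /R.
by move: (hr (inA (emb k))) => /matrixP /(_ i j); rewrite mxE.
Qed.
Lemma e_conjc_nz : (forall g, map_mx (@conjc RR) (rho g) = rho g) ->
  forall c, e c != 0 -> e (- c) != 0.
Proof. by move=> hr c; rewrite -(e_conjc hr) map_mx_eq0. Qed.
End Weights.

Definition negK (c : K) : K := - c.
Definition step (fs : seq (K -> K)) (L : seq K) :=
  undup (L ++ flatten [seq [seq f x | f <- fs] | x <- L]).
Definition clos fs (c : K) := iter 4 (step fs) [:: c].
Definition z3s : seq 'Z_3 := [:: 0; 1; 1 + 1].
Definition allK : seq K := [seq (x, d) | x <- [seq (a, b) | a <- z3s, b <- z3s], d <- z3s].
Definition ops4 := [:: ta01; sg12; sg23].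
Definition opsR := [:: ta01; sg12; sg23; negK].
Lemma check4 : all (fun c => (c == 0) || (4 <= size (clos ops4 c))%N) allK.
Proof. by vm_compute. Qed.
Lemma check6 : all (fun c => (c == 0) || (6 <= size (clos opsR c))%N) allK.
Proof. by vm_compute. Qed.
Lemma z3P (t : 'Z_3) : t \in z3s.
Proof. by case: t => [[|[|[|//]]] ?]; vm_compute. Qed.
Lemma allKP c : c \in allK.
Proof. by case: c => [[a b] d]; apply: allpairs_f; [apply: allpairs_f|]; apply: z3P. Qed.
Lemma step_sub (T : {set K}) fs L : (forall x, x \in T -> all (mem T) [seq f x | f <- fs]) ->
  all (mem T) L -> all (mem T) (step fs L).
Proof.
move=> hf /allP hL; apply/allP => x; rewrite mem_undup mem_cat => /orP [/hL //|].
case/flattenP => s /mapP [y yL ->] xs.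
by have /allP := hf y (hL y yL); apply.
Qed.
Lemma clos_sub (T : {set K}) fs c : (forall x, x \in T -> all (mem T) [seq f x | f <- fs]) ->
  c \in T -> all (mem T) (clos fs c).
Proof.
move=> hf cT; rewrite /clos; elim: 4%N => [|m IH] /=; first by rewrite cT.
exact: step_sub.
Qed.
Lemma clos_uniq fs c : uniq (clos fs c).
Proof. by rewrite /clos iterS undup_uniq. Qed.
Lemma card_ge (T : {set K}) (s : seq K) : uniq s -> all (mem T) s -> (size s <= #|T|)%N.
Proof.
move=> /card_uniqP <- /allP sT; apply: subset_leq_card.
by apply/subsetP => x /sT.
Qed.
Lemma wt4 (T : {set K}) :
  (forall x, x \in T -> ta01 x \in T) -> (forall x, x \in T -> sg12 x \in T) ->
  (forall x, x \in T -> sg23 x \in T) -> (exists c, c != 0 /\ c \in T) -> (4 <= #|T|)%N.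
Proof.
move=> h1 h2 h3 [c [cn cT]].
have hf : forall x, x \in T -> all (mem T) [seq f x | f <- ops4].
  by move=> x xT /=; rewrite h1 ?h2 ?h3.
apply: leq_trans (card_ge (clos_uniq ops4 c) (clos_sub hf cT)).
by have := allP check4 c (allKP c); rewrite (negbTE cn).
Qed.
Lemma wt6 (T : {set K}) :
  (forall x, x \in T -> ta01 x \in T) -> (forall x, x \in T -> sg12 x \in T) ->
  (forall x, x \in T -> sg23 x \in T) -> (forall x, x \in T -> - x \in T) ->
  (exists c, c != 0 /\ c \in T) -> (6 <= #|T|)%N.
Proof.
move=> h1 h2 h3 h4 [c [cn cT]].
have hf : forall x, x \in T -> all (mem T) [seq f x | f <- opsR].
  by move=> x xT /=; rewrite h1 ?h2 ?h3 ?h4.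
apply: leq_trans (card_ge (clos_uniq opsR c) (clos_sub hf cT)).
by have := allP check6 c (allKP c); rewrite (negbTE cn).
Qed.

Section LB.
Variables (n : nat) (rho : mx_representation CC G5p3 n).
Let T := [set c | e rho c != 0%R].
Lemma T1 x : x \in T -> ta01 x \in T.
Proof. rewrite !inE; exact: (e_conj_nz emb_t01 sg01K dot_sg01). Qed.
Lemma T2 x : x \in T -> sg12 x \in T.
Proof. rewrite !inE; exact: (e_conj_nz emb_t12 sg12K dot_sg12). Qed.
Lemma T3 x : x \in T -> sg23 x \in T.
Proof. rewrite !inE; exact: (e_conj_nz emb_t23 sg23K dot_sg23). Qed.
Lemma Tex : (exists k, R rho k != 1%:M) -> exists c, c != 0 /\ c \in T.
Proof. by move/weight_nontriv => [c [h1 h2]]; exists c; rewrite inE. Qed.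
Lemma LB_C : (exists k, R rho k != 1%:M) -> (4 <= n)%N.
Proof.
move=> h; apply: leq_trans (card_wt rho).
exact: (wt4 T1 T2 T3 (Tex h)).
Qed.
Lemma LB_R : (forall g, map_mx (@conjc RR) (rho g) = rho g) ->
  (exists k, R rho k != 1%:M) -> (6 <= n)%N.
Proof.
move=> hr h; apply: leq_trans (card_wt rho).
apply: (wt6 T1 T2 T3 _ (Tex h)) => x; rewrite !inE; exact: e_conjc_nz.
Qed.
Lemma faithful_nontriv : mx_faithful rho -> R rho k100 != 1%:M.
Proof.
move=> ff; apply/eqP => h.
have : inA (emb k100) \in rker rho by apply/rkerP; split; [exact: inG | exact: h].
move/(subsetP ff); rewrite inE => /eqP /(inA_inj (emb_in _)) /eqP.
by rewrite (negbTE emb100_neq0).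
Qed.
End LB.
Lemma LB_C_faithful n (rho : mx_representation CC G5p3 n) : mx_faithful rho -> (4 <= n)%N.
Proof. by move=> ff; apply: (@LB_C n rho); exists k100; exact: faithful_nontriv. Qed.
Lemma LB_R_faithful n (rr : mx_representation RR G5p3 n) : mx_faithful rr -> (6 <= n)%N.
Proof.
move=> ff; apply: (@LB_R n (map_repr (real_complex RR) rr)).
  move=> g; rewrite !map_reprE -map_mx_comp; apply: eq_map_mx => x /=; exact: conjc_real.
by exists k100; apply: faithful_nontriv; rewrite map_mx_faithful.
Qed.

Lemma small_triv m (r : mx_representation CC G5p3 m) : (m < 4)%N -> R r k100 = 1%:M.
Proof.
move=> lt; case: (boolP (R r k100 == 1%:M)) => [/eqP //|h].
by have := @LB_C m r (ex_intro _ k100 h); rewrite leqNgt lt.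
Qed.
Lemma k100_3 : k100 + k100 + k100 = 0.
Proof. by apply/eqP; vm_compute. Qed.
Lemma irr4 (rV : mx_representation CC G5p3 4) : mx_faithful rV -> mx_irreducible rV.
Proof.
move=> ff; apply/mx_irrP; split => // U modU nzU.
apply: contraT => nfull.
have rU4 : (\rank U < 4)%N by rewrite ltn_neqAle rank_leq_col andbT.
have rU0 : (0 < \rank U)%N by rewrite lt0n mxrank_eq0.
have hS := small_triv (submod_repr modU) rU4.
have hF : R (factmod_repr modU) k100 = 1%:M.
  apply: small_triv; rewrite mxrank_coker.
  by rewrite ltn_subrL rU0.
set g := inA (emb k100).
set M := rV g.
set N := M - 1%:M.
have h1 : val_submod (U:=U) (1%:M : 'M_(\rank U)) *m N = 0.
  have := val_submodJ modU (1%:M) (inG g).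
  rewrite -/(R (submod_repr modU) k100) hS mulmx1 => h.
  by rewrite mulmxBr mulmx1 -h subrr.
have h2 : (N <= U)%MS.
  rewrite -in_factmod_eq0; have := in_factmodJ modU (1%:M) (inG g).
  rewrite -/(R (factmod_repr modU) k100) hF mulmx1 mul1mx => h.
  move: h; rewrite /in_factmod /= => h.
  by rewrite /N mulmxBl h subrr.
have NN : N *m N = 0.
  have : (N <= val_submod (U:=U) (1%:M : 'M_(\rank U)))%MS by rewrite val_submod1.
  by case/submxP => D hD; rewrite {1}hD -mulmxA h1 mulmx0.
have NX : N *m (1%:M + N) = N by rewrite mulmxDr mulmx1 NN addr0.
have MM : (1%:M + N) *m (1%:M + N) = 1%:M + N + N by rewrite mulmxDl mul1mx NX.
have ME : M = 1%:M + N by rewrite /N addrC subrK.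
have M3 : M *m M *m M = 1%:M.
  by rewrite /M /g -!/(R rV _) !R_mul k100_3 R0.
rewrite ME MM mulmxDl MM NX in M3.
have N3 : 3%:R *: N = 0.
  by rewrite scaler_nat; apply: (addrI 1%:M); rewrite addr0 -{2}M3 !mulrS mulr0n addr0 !addrA.

have N0 : N = 0.
  by move/eqP: N3; rewrite scaler_eq0 pnatr_eq0 /= => /eqP.
have := faithful_nontriv ff; rewrite /R -/g -/M.
by move: N0; rewrite /N => /eqP; rewrite subr_eq0 => ->.
Qed.
Lemma nonreal4 (rV : mx_representation CC G5p3 4) : mx_faithful rV -> ~ is_real_repr rV.
Proof.
move=> ff [rR sim].
have frR : mx_faithful rR by rewrite -(map_mx_faithful (real_complex RR)) (mx_rsim_faithful sim).
by have := LB_R_faithful frR.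
Qed.
Lemma part4 (rV : mx_representation CC G5p3 4) (rR : mx_representation RR G5p3 6)
    m (rW : mx_representation CC G5p3 m) :
  mx_faithful rV -> mx_faithful rR -> realification_of rV rW ->
  ~ mx_rsim (map_repr (real_complex RR) rR) rW.
Proof.
move=> fV fR [I [U [P [dir sum1 simp Pch [modN sim]]]]] sim2.
have /mx_irrP [_ irr] := irr4 fV.
have full i : row_full (U i).
  by case: (simp i) => modUi nzUi _; apply: irr.
have e1 := mxrank_rsim sim.
have e2 := mxrank_rsim sim2.
move: e1 e2 modN sim; set N := (\sum_(i | ~~ P i) U i)%MS => e1 e2 modN sim.
have : \rank N = 0%N \/ \rank N = 4%N.
  case: (pickP (fun i => ~~ P i)) => [i Pi | none].
    right; apply/eqP; rewrite -/(row_full N) -sub1mx.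
    apply: submx_trans (sumsmx_sup i Pi (submx_refl (U i))).
    by rewrite sub1mx.
  left; rewrite /N big_pred0 ?mxrank0 //.
by case=> h; move: e2; rewrite e1 h.
Qed.

Lemma sdmulE1 (u v : Z30_rtimes_S4) : ((u * v)%g).1 = (u.1 * v.1)%g.
Proof. by []. Qed.
Lemma sdmulE2 (u v : Z30_rtimes_S4) : ((u * v)%g).2 = toA u.2 v.1 + v.2.
Proof. by []. Qed.
Lemma sd2_in (u : Z30_rtimes_S4) : u.2 \in Z30.
Proof. by case: u => [[a x] /= /setXP []]. Qed.
Lemma sdE (u : Z30_rtimes_S4) : ((1 : Z30_rtimes_S4)%g).1 = 1%g /\ ((1 : Z30_rtimes_S4)%g).2 = 0.
Proof. by []. Qed.
Definition D4 (x : 'rV['Z_3]_4) : 'M[CC]_4 := diag_mx (\row_j pw (x 0 j)).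
Lemma D4D x y : D4 (x + y) = D4 x *m D4 y.
Proof. by rewrite /D4 mulmx_diag; congr diag_mx; apply/rowP => j; rewrite !mxE pwD. Qed.
Lemma D40 : D4 0 = 1%:M.
Proof. by apply/matrixP => i j; rewrite !mxE pw0. Qed.
Lemma perm_D4 s x : perm_mx s *m D4 (x *m perm4_mx s) = D4 x *m perm_mx s.
Proof.
have -> : D4 (x *m perm4_mx s) = diag_mx (\row_j pw (x 0 ((s^-1)%g j))).
  by rewrite /D4; congr diag_mx; apply/rowP => j; rewrite mxE [in RHS]mxE mul_perm4.
rewrite -row_permE -[s in RHS]invgK -col_permE; apply/matrixP => i j; rewrite !mxE.
case: (eqVneq (s i) j) => [<-|ne]; first by rewrite permK eqxx.
have -> : (i == (s^-1)%g j) = false.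
  by apply/negbTE; apply: contra ne => /eqP ->; rewrite permKV.
by [].
Qed.
Definition rho4_mx (u : Z30_rtimes_S4) : 'M[CC]_4 := perm_mx u.1 *m D4 u.2.
Lemma rho4_repr : mx_repr G5p3 rho4_mx.
Proof.
split.
  by rewrite /rho4_mx /= perm_mx1 mul1mx; exact: D40.
move=> u v _ _; rewrite /rho4_mx sdmulE1 sdmulE2 toAE ?sd2_in // D4D perm_mxM.
by rewrite mulmxA -(mulmxA (perm_mx u.1)) perm_D4 !mulmxA.
Qed.
Canonical rho4 := MxRepresentation rho4_repr.
Lemma rho4_faithful : mx_faithful rho4.
Proof.
apply/subsetP => u /rkerP [_ h]; rewrite inE.
have ent : forall i j, (D4 u.2) (u.1 i) j = (i == j)%:R.
  by move=> i j; move: h => /matrixP /(_ i j); rewrite /= /rho4_mx -row_permE !mxE.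
have s1 : u.1 = 1%g.
  apply/permP => i; rewrite perm1; have := ent i (u.1 i); rewrite !mxE eqxx mulr1n.
  by case: eqP => // _ /eqP; rewrite (negbTE (pw_neq0 _)).
have x0 : u.2 = 0.
  apply/rowP => j; have := ent j j; rewrite s1 perm1 !mxE eqxx mulr1n => /eqP.
  by rewrite pw_eq1 => /eqP ->.
apply/eqP; apply: val_inj; rewrite /= [LHS]surjective_pairing.
by rewrite s1 x0.
Qed.

Definition X := {P : {set 'I_4} | #|P| == 2}.
Lemma x0_proof : #|[set i0; i1]| == 2.
Proof. by rewrite cards2. Qed.
Definition x0 : X := exist _ [set i0; i1] x0_proof.
Notation d := #|{: X}|.
Definition Pk (k : 'I_d) : {set 'I_4} := val (enum_val k).
Definition ix (S : {set 'I_4}) : 'I_d := enum_rank (insubd x0 S).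
Lemma Pk2 k : #|Pk k| = 2.
Proof. by apply/eqP; exact: (valP (enum_val k)). Qed.
Lemma Pix (S : {set 'I_4}) : #|S| = 2 -> Pk (ix S) = S.
Proof. by move=> h; rewrite /Pk /ix enum_rankK insubdK // unfold_in /= h. Qed.
Lemma ixP k : ix (Pk k) = k.
Proof. by rewrite /ix /Pk valKd enum_valK. Qed.
Lemma card_img (a : {perm 'I_4}) (S : {set 'I_4}) : #|a @: S| = #|S|.
Proof. exact: card_imset (@perm_inj _ a). Qed.
Lemma card_C2 (S : {set 'I_4}) : #|S| = 2 -> #|~: S| = 2.
Proof. by move=> h; have := cardsC S; rewrite h card_ord => /eqP; rewrite -[4%N]/(2 + 2)%N eqn_add2l => /eqP. Qed.
Lemma imsetCp (a : {perm 'I_4}) (S : {set 'I_4}) : a @: (~: S) = ~: (a @: S).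
Proof.
apply/setP => y; rewrite inE -{1 2}(permKV a y) !mem_imset ?inE //; exact: perm_inj.
Qed.
Definition cP (x : 'rV['Z_3]_4) (S : {set 'I_4}) : 'Z_3 := \sum_(i in S) x 0 i.
Lemma cPD x y S : cP (x + y) S = cP x S + cP y S.
Proof. by rewrite /cP -big_split; apply: eq_bigr => i _; rewrite mxE. Qed.
Lemma cP0 S : cP 0 S = 0.
Proof. by rewrite /cP big1 // => i _; rewrite mxE. Qed.
Lemma cPC x S : x \in Z30 -> cP x (~: S) = - cP x S.
Proof.
rewrite inE (bigID (mem S)) /= => /eqP h; apply/eqP; rewrite -addr_eq0 addrC /cP -[X in _ == X]h.
apply/eqP; congr (_ + _); by apply: eq_bigl => i; rewrite ?inE.
Qed.
Lemma cP_perm x (b : {perm 'I_4}) (S : {set 'I_4}) : cP (x *m perm4_mx b) (b @: S) = cP x S.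
Proof.
rewrite /cP big_imset /=; last by move=> i j _ _; exact: perm_inj.
by apply: eq_bigr => i _; rewrite mul_perm4 permK.
Qed.
Definition al' (t : 'Z_3) : int := match val t with 0 => 1 | 1 => -1 | _ => 0 end.
Definition be' (t : 'Z_3) : int := match val t with 0 => 0 | 1 => 1 | _ => -1 end.
Lemma ab_check : all (fun c => all (fun e =>
   (al' (c + e) == al' c * al' e + be' c * be' (- e)) &&
   (be' (c + e) == al' c * be' e + be' c * al' (- e))) z3s) z3s.
Proof. by vm_compute. Qed.
Definition al t : RR := (al' t)%:~R.
Definition be t : RR := (be' t)%:~R.
Lemma ab_id c e : al (c + e) = al c * al e + be c * be (- e) /\
                  be (c + e) = al c * be e + be c * al (- e).
Proof.
have := allP ab_check c (z3P c) => /allP /(_ e (z3P e)) /andP [/eqP h1 /eqP h2].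
by rewrite /al /be h1 h2 !rmorphD !rmorphM.
Qed.
Lemma al0 : al 0 = 1. Proof. by []. Qed.
Lemma be0 : be 0 = 0. Proof. by []. Qed.
Definition Q (a : {perm 'I_4}) : 'M[RR]_d := \matrix_(k, l) (l == ix (a @: Pk k))%:R.
Definition Ex (x : 'rV['Z_3]_4) : 'M[RR]_d :=
  \matrix_(k, l) (al (cP x (Pk k)) * (l == k)%:R + be (cP x (Pk k)) * (l == ix (~: Pk k))%:R).
Lemma sum_delta (m0 : 'I_d) (F : 'I_d -> RR) : \sum_m (m == m0)%:R * F m = F m0.
Proof.
rewrite (bigD1 m0) //= eqxx mul1r big1 ?addr0 // => m /negbTE ->; by rewrite mul0r.
Qed.
Lemma mulQ a (B : 'M[RR]_d) k l : (Q a *m B) k l = B (ix (a @: Pk k)) l.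
Proof. by rewrite mxE -(sum_delta (ix (a @: Pk k)) (fun m => B m l)); apply: eq_bigr => m _; rewrite mxE. Qed.
Lemma mulE x (B : 'M[RR]_d) k l : (Ex x *m B) k l =
  al (cP x (Pk k)) * B k l + be (cP x (Pk k)) * B (ix (~: Pk k)) l.
Proof.
rewrite mxE (eq_bigr (fun m => al (cP x (Pk k)) * ((m == k)%:R * B m l) +
   be (cP x (Pk k)) * ((m == ix (~: Pk k))%:R * B m l))); last first.
  by move=> m _; rewrite mxE mulrDl !mulrA.
by rewrite big_split /= -!big_distrr /= !sum_delta.
Qed.
Lemma Q1 : Q 1 = 1%:M.
Proof.
apply/matrixP => k l; rewrite !mxE.
rewrite (eq_imset _ (@perm1 _)) imset_id ixP eq_sym.
by [].
Qed.
Lemma QM a b : Q (a * b)%g = Q a *m Q b.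
Proof.
apply/matrixP => k l; rewrite mulQ !mxE Pix ?card_img ?Pk2 //.
by rewrite -imset_comp; congr ((l == ix _)%:R); apply: eq_imset => i; rewrite /= permM.
Qed.
Lemma E0 : Ex 0 = 1%:M.
Proof.
apply/matrixP => k l; rewrite !mxE cP0 al0 be0 mul0r addr0 mul1r eq_sym.
by [].
Qed.
Lemma ED x y : y \in Z30 -> Ex (x + y) = Ex x *m Ex y.
Proof.
move=> Zy; apply/matrixP => k l; rewrite mulE !mxE.
rewrite Pix ?card_C2 ?Pk2 // cPC // setCK ixP cPD.
have [h1 h2] := ab_id (cP x (Pk k)) (cP y (Pk k)).
rewrite h1 h2; ring.
Qed.
Lemma QE b x : Q b *m Ex (x *m perm4_mx b) = Ex x *m Q b.
Proof.
apply/matrixP => k l; rewrite mulQ mulE !mxE Pix ?card_img ?Pk2 //.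
by rewrite cP_perm Pix ?card_C2 ?Pk2 // imsetCp.
Qed.
Definition rho6_mx (u : Z30_rtimes_S4) : 'M[RR]_d := Q u.1 *m Ex u.2.
Lemma rho6_repr : mx_repr G5p3 rho6_mx.
Proof.
split.
  by rewrite /rho6_mx /= Q1 mul1mx; exact: E0.
move=> u v _ _; rewrite /rho6_mx sdmulE1 sdmulE2 toAE ?sd2_in // ED ?sd2_in // QM.
by rewrite mulmxA -(mulmxA (Q u.1)) QE !mulmxA.
Qed.
Canonical rho6 := MxRepresentation rho6_repr.
Lemma ab_bool t (b1 b2 : bool) : al t = b1%:R -> be t = b2%:R -> t = 0 /\ b1 = true.
Proof.
case: t => [[|[|[|//]]] ?]; rewrite /al /be /al' /be' /=;
  rewrite ?rmorph1 ?rmorph0 ?rmorphN1.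
- move=> h1 _; split; first by apply: val_inj.
  by move: h1; case: b1 => //=; rewrite ?mulr0n => h; exfalso; lra.
- by move=> h1 _; exfalso; move: h1; case: b1 => /=; rewrite ?mulr0n ?mulr1n => h; lra.
- by move=> _ h2; exfalso; move: h2; case: b2 => /=; rewrite ?mulr0n ?mulr1n => h; lra.
Qed.
Lemma S_neq_C (S : {set 'I_4}) : #|S| = 2 -> S != ~: S.
Proof.
move=> h; apply/eqP => eS; have : (0 < #|S|)%N by rewrite h.
case/card_gt0P => i iS; move: (iS); rewrite {1}eS inE iS. by [].
Qed.
Lemma ix_inj (S S' : {set 'I_4}) : #|S| = 2 -> #|S'| = 2 -> ix S = ix S' -> S = S'.
Proof. by move=> h h' e; rewrite -(Pix h) -(Pix h') e. Qed.
Lemma card2 (i j : 'I_4) : i != j -> #|[set i; j]| = 2.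
Proof. by move=> h; rewrite cards2 h. Qed.
Lemma fix_pt (a : {perm 'I_4}) i j k : i != j -> i != k -> j != k ->
  a @: [set i; j] = [set i; j] -> a @: [set i; k] = [set i; k] -> a i = i.
Proof.
move=> ij ik jk h1 h2.
have m1 : a i \in [set i; j] by rewrite -h1 imset_f // set21.
have m2 : a i \in [set i; k] by rewrite -h2 imset_f // set21.
case/set2P: m1 => [//|e1]; case/set2P: m2 => [//|e2].
by rewrite e1 in e2; rewrite e2 eqxx in jk.
Qed.
Lemma fix_all (a : {perm 'I_4}) : (forall S : {set 'I_4}, #|S| = 2 -> a @: S = S) -> a = 1%g.
Proof.
move=> h; apply/permP => i; rewrite perm1.
case: (ord4P i) => ->.
- by apply: (@fix_pt a i0 i1 i2) => //; apply: h; apply: card2.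
- by apply: (@fix_pt a i1 i0 i2) => //; apply: h; apply: card2.
- by apply: (@fix_pt a i2 i0 i1) => //; apply: h; apply: card2.
- by apply: (@fix_pt a i3 i0 i1) => //; apply: h; apply: card2.
Qed.
Lemma z3_triple (t : 'Z_3) : t + t + t = 0.
Proof. by case: t => [[|[|[|//]]] ?]; apply: val_inj. Qed.
Lemma x_zero x : x \in Z30 -> (forall S : {set 'I_4}, #|S| = 2 -> cP x S = 0) -> x = 0.
Proof.
move=> Zx h.
have c2 i j : i != j -> cP x [set i; j] = x 0 i + x 0 j.
  by move=> ij; rewrite /cP big_setU1 ?big_set1 // inE.
have h01 := h _ (card2 (isT : i0 != i1)); rewrite c2 // in h01.
have h02 := h _ (card2 (isT : i0 != i2)); rewrite c2 // in h02.
have h12 := h _ (card2 (isT : i1 != i2)); rewrite c2 // in h12.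
have e1 : x 0 i1 = - x 0 i0 by apply/eqP; rewrite -addr_eq0 addrC h01.
have e2 : x 0 i2 = - x 0 i0 by apply/eqP; rewrite -addr_eq0 addrC h02.
have e0 : x 0 i0 = 0.
  have hm : - (x 0 i0 + x 0 i0) = 0 by rewrite opprD -{1}e1 -e2 h12.
  by have := z3_triple (x 0 i0); rewrite -addrA => /eqP; rewrite addr_eq0 hm => /eqP.
move: Zx; rewrite inE !big_ord_recl big_ord0 addr0 => /eqP hs.
have e3 : x 0 i3 = 0.
  move: hs.
  have -> : (lift ord0 (lift ord0 (lift ord0 ord0)) : 'I_4) = i3 by apply: val_inj.
  have -> : (lift ord0 (lift ord0 ord0) : 'I_4) = i2 by apply: val_inj.
  have -> : (lift ord0 ord0 : 'I_4) = i1 by apply: val_inj.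
  have -> : (ord0 : 'I_4) = i0 by apply: val_inj.
  by rewrite e1 e2 e0 oppr0 !add0r.
apply/rowP => j; rewrite mxE; case: (ord4P j) => ->.
- exact: e0.
- by rewrite e1 e0 oppr0.
- by rewrite e2 e0 oppr0.
- exact: e3.
Qed.
Lemma rho6_faithful : mx_faithful rho6.
Proof.
apply/subsetP => u /rkerP [_ /matrixP h]; rewrite inE.
have key : forall k, u.1 @: Pk k = Pk k /\ cP u.2 (Pk k) = 0.
  move=> k; set S := u.1 @: Pk k.
  have S2 : #|S| = 2 by rewrite card_img Pk2.
  have jj : (ix S == ix (~: S)) = false.
    apply/negbTE/eqP => /(ix_inj S2 (card_C2 S2)) /eqP.
    by rewrite (negbTE (S_neq_C S2)).
  have ent l : Ex u.2 (ix S) l = (k == l)%:R.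
    by have := h k l; rewrite /= /rho6_mx mulQ => ->; rewrite mxE.
  have ej := ent (ix S); have ej' := ent (ix (~: S)).
  rewrite !mxE Pix // eqxx jj mulr1 mulr0 addr0 in ej.
  rewrite !mxE Pix // eq_sym jj eqxx mulr1 mulr0 add0r in ej'.
  have [c0 /eqP kj] := ab_bool ej ej'.
  by rewrite kj Pix.
have fa : u.1 = 1%g.
  apply: fix_all => S S2; have := (key (ix S)).1; by rewrite Pix.
have fx : u.2 = 0.
  apply: x_zero; first exact: sd2_in.
  by move=> S S2; have := (key (ix S)).2; rewrite Pix.
apply/eqP; apply: val_inj; rewrite /= [LHS]surjective_pairing.
by rewrite fa fx.
Qed.
Lemma cardX : #|{: X}| = 6%N.
Proof.
rewrite card_sig; have := card_draws 'I_4 2%N; rewrite card_ord => h; rewrite -[6%N]/('C(4, 2)) -h.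
by apply: eq_card => P; rewrite inE.
Qed.
Lemma exists6 : exists rG : mx_representation RR G5p3 6, mx_faithful rG.
Proof.
have : exists rG : mx_representation RR G5p3 #|{: X}|, mx_faithful rG by exists rho6; exact: rho6_faithful.
by rewrite cardX.
Qed.
Theorem theorem5p3 :
  [/\ has_mdim CC G5p3 4,
      has_mdim RR G5p3 6,
      (forall rV : mx_representation CC G5p3 4,
          mx_faithful rV -> mx_irreducible rV /\ ~ is_real_repr rV) &
      (forall (rV : mx_representation CC G5p3 4)
              (rR : mx_representation RR G5p3 6)
              m (rW : mx_representation CC G5p3 m),
          mx_faithful rV -> mx_faithful rR -> realification_of rV rW ->
          ~ mx_rsim (map_repr (real_complex RR) rR) rW)].
Proof.
split.
- split; [by exists rho4; exact: rho4_faithful | exact: LB_C_faithful].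
- split; [exact: exists6 | exact: LB_R_faithful].
- by move=> rV ff; split; [exact: irr4 | exact: nonreal4].
- exact: part4.
Qed.
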